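(* Let $\tau\in\{1,\dots,c\}$ with $\tau\le c/2$, and let $0<x_L<x_H<1$ with $x^*-x_L=x_H-x^*$. Consider the two-price policy with parameters $x_L,x_H,\tau$ and its steady-state distribution $\pi$, and set $\varsigma_L=\frac{1}{\pi_0}\sum_{j=1}^\tau\pi_j$, $\varsigma_H=\frac1{\pi_0}\sum_{j=\tau+1}^c\pi_j$. Then $$\varsigma_L\ge\Big(1-\frac{\tau^2}{2c}\Big)\frac{(x^*/x_L)^\tau-1}{1-x_L/x^*},\qquad \varsigma_L-\varsigma_H\le\frac{(x^*/x_L)^\tau}{1-x_L/x^*}\Big(\frac{2\tau^2}{c}+(x^*/x_H)^\tau\Big).$$
   Context: Setting. Fix $c\in\mathbb N$ (number of identical units of a single reusable resource), an arrival rate $\lambda>0$ and a mean usage duration $d>0$, with $x^*:=c/(\lambda d)\in(0,1)$. A stock-dependent policy is a vector $\mathbf x=(x_1,\dots,x_c)\in[0,1]^c$, where $x_j$ is the admission probability used when exactly $j$ units are available. Its steady-state distribution is the unique probability vector $\pi=(\pi_0,\dots,\pi_c)$ satisfying $\pi_j\lambda x_j=\pi_{j-1}(c-j+1)/d$ for all $j\in\{1,\dots,c\}$. A two-price policy with parameters $x_L,x_H\in[0,1]$ and $\tau\in\{1,\dots,c\}$ sets $x_j=x_L$ for $1\le j\le\tau$ and $x_j=x_H$ for $\tau<j\le c$. *)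

(* Defs.v *)
From HB Require Import structures.
From mathcomp Require Import all_boot all_order all_algebra.
Set Implicit Arguments. Unset Strict Implicit. Unset Printing Implicit Defensive.
Import Order.TTheory GRing.Theory Num.Theory.
Local Open Scope ring_scope.

Definition xstar {R : realFieldType} (c : nat) (lam d : R) : R := c%:R / (lam * d).

(* two-price policy: x_j = x_L for 1 <= j <= tau, x_j = x_H for tau < j <= c
   (the value at j = 0 is irrelevant and never used) *)
Definition two_price {R : realFieldType} (xL xH : R) (tau : nat) (j : nat) : R :=
  if (j <= tau)%N then xL else xH.

(* pi (indexed by 0..c) is the steady-state distribution of the stock-dependent
   policy x: a probability vector satisfying the balance equations
   pi_j * lambda * x_j = pi_{j-1} * (c - j + 1) / d  for 1 <= j <= c. *)
Definition steady_state {R : realFieldType} (c : nat) (lam d : R)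
    (x : nat -> R) (pi : nat -> R) : Prop :=
  (forall j, (j <= c)%N -> 0 <= pi j) /\
  \sum_(0 <= j < c.+1) pi j = 1 /\
  (forall j, (1 <= j <= c)%N ->
     pi j * lam * x j = pi j.-1 * (c.+1 - j)%:R / d).

(* Main.v *)
Require Import Defs.
From HB Require Import structures.
From mathcomp Require Import all_boot all_order all_algebra ring lra.
Import Order.TTheory GRing.Theory Num.Theory.
Local Open Scope ring_scope.

Definition Pp {R : realFieldType} (c n : nat) : R :=
  \prod_(0 <= i < n) (1 - i%:R / c%:R).

Lemma Pp_bounds (R : realFieldType) (c n : nat) : (0 < c)%N -> (n <= c)%N ->
  0 <= @Pp R c n /\ @Pp R c n <= 1 /\
  1 - (n%:R * (n%:R - 1)) / (2 * c%:R) <= @Pp R c n.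
Proof.
move=> c0; elim: n => [|n IH] Hn.
  by rewrite /Pp big_geq //; split => //; split => //; rewrite mul0r mul0r subr0.
have [H0 [H1 H2]] := IH (ltnW Hn).
rewrite /Pp big_nat_recr //= -/(Pp c n).
have cp : 0 < c%:R :> R by rewrite ltr0n.
have ncle : n%:R < c%:R :> R by rewrite ltr_nat.
have u0 : 0 <= n%:R / c%:R :> R by rewrite divr_ge0 // ler0n.
have u1 : n%:R / c%:R < 1 :> R by rewrite ltr_pdivrMr // mul1r.
have Sn : 0 <= n%:R * (n%:R - 1) :> R.
  case: n {IH Hn H0 H1 H2 ncle u0 u1} => [|n]; first by rewrite mul0r.
  by rewrite mulr_ge0 // -natr1 addrK ler0n.
have S0 : 0 <= (n%:R * (n%:R - 1)) / (2 * c%:R) :> R.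
  by rewrite divr_ge0 // mulr_ge0 // ler0n.
have E : (n.+1%:R * (n.+1%:R - 1)) / (2 * c%:R) =
   (n%:R * (n%:R - 1)) / (2 * c%:R) + n%:R / c%:R :> R.
  rewrite -natr1; field; by rewrite pnatr_eq0 -lt0n.
rewrite E.
split; first by rewrite mulr_ge0 // subr_ge0 ltW.
set S := _ / (2 * _) in S0 H2 *. set u := _ / _ in u0 u1 *.
split; first nra.
nra.
Qed.

Lemma geom1 (R : realFieldType) (a : R) (n : nat) : a != 0 ->
  (\sum_(1 <= j < n.+1) a ^+ j) * (1 - a^-1) = a ^+ n - 1.
Proof.
move=> a0; elim: n => [|n IH]; first by rewrite big_geq // mul0r expr0 subrr.
rewrite big_nat_recr //= mulrDl IH exprS; by field.
Qed.

Lemma geom2 (R : realFieldType) (b : R) (n : nat) : b != 0 ->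
  (\sum_(1 <= j < n.+1) b ^+ j) * (b^-1 - 1) = 1 - b ^+ n.
Proof.
move=> b0; elim: n => [|n IH]; first by rewrite big_geq // mul0r expr0 subrr.
rewrite big_nat_recr //= mulrDl IH exprS; by field.
Qed.

Fixpoint ww {R : realFieldType} (xs xL xH : R) (tau j : nat) : R :=
  match j with 0 => 1 | j'.+1 => ww xs xL xH tau j' * (xs / two_price xL xH tau j'.+1) end.

Lemma ww_ge0 (R : realFieldType) (xs xL xH : R) tau j :
  0 < xs -> 0 < xL -> 0 < xH -> 0 <= ww xs xL xH tau j.
Proof.
move=> h1 h2 h3; elim: j => [|j IH] //=.
rewrite mulr_ge0 // divr_ge0 //; [exact: ltW | rewrite /two_price; case: ifP => _; exact: ltW].
Qed.

Lemma ww_low (R : realFieldType) (xs xL xH : R) tau j : (j <= tau)%N ->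
  ww xs xL xH tau j = (xs / xL) ^+ j.
Proof.
elim: j => [|j IH] H //=. by rewrite IH ?(ltnW H) // /two_price H exprSr.
Qed.

Lemma ww_high (R : realFieldType) (xs xL xH : R) tau k :
  ww xs xL xH tau (k + tau) = (xs / xL) ^+ tau * (xs / xH) ^+ k.
Proof.
elim: k => [|k IH] /=; first by rewrite add0n ww_low // expr0 mulr1.
rewrite IH /two_price leqNgt ltnS leq_addl /= exprSr; ring.
Qed.

Lemma pi_form (R : realFieldType) (c : nat) (lam d xL xH : R) (tau : nat) (pi : nat -> R) :
  0 < lam -> 0 < d -> (0 < c)%N -> 0 < xL -> xL < xH ->
  steady_state c lam d (two_price xL xH tau) pi ->
  forall j, (j <= c)%N ->
  pi j = pi 0%N * ww (xstar c lam d) xL xH tau j * @Pp R c j.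
Proof.
move=> l0 d0 c0 xL0 xLH [_ [_ B]]; elim=> [|j IH] Hj.
  by rewrite /= /Pp big_geq // !mulr1.
have xp : 0 < two_price xL xH tau j.+1 by rewrite /two_price; case: ifP => _; lra.
have := B j.+1; rewrite Hj /= => /(_ isT) E.
have -> : pi j.+1 = (pi j.+1 * lam * two_price xL xH tau j.+1) /
   (lam * two_price xL xH tau j.+1).
  field; apply/andP; split; by rewrite gt_eqF.
rewrite E IH ?(ltnW Hj) //= /Pp big_nat_recr //= subSS natrB ?(ltnW Hj) //.
rewrite /xstar; field.
by rewrite pnatr_eq0 -lt0n c0 !gt_eqF.
Qed.

Theorem lemma2 (R : realFieldType) (c : nat) (lam d xL xH : R) (tau : nat)
    (pi : nat -> R) :
  0 < lam -> 0 < d ->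
  0 < xstar c lam d -> xstar c lam d < 1 ->
  (1 <= tau)%N -> (tau <= c)%N -> (tau%:R <= c%:R / 2 :> R) ->
  0 < xL -> xL < xH -> xH < 1 ->
  xstar c lam d - xL = xH - xstar c lam d ->
  steady_state c lam d (two_price xL xH tau) pi ->
  let xs := xstar c lam d in
  let sL := (\sum_(1 <= j < tau.+1) pi j) / pi 0%N in
  let sH := (\sum_(tau.+1 <= j < c.+1) pi j) / pi 0%N in
  (1 - tau%:R ^+ 2 / (2 * c%:R)) * (((xs / xL) ^+ tau - 1) / (1 - xL / xs)) <= sL /\
  sL - sH <= (xs / xL) ^+ tau / (1 - xL / xs) *
             (2 * tau%:R ^+ 2 / c%:R + (xs / xH) ^+ tau).
Proof.
move=> l0 d0 xs0 xs1 t1 tc tc2 xL0 xLH xH1 rel SS xs sL sH.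
have c0 : (0 < c)%N by apply: leq_trans t1 tc.
have cp : 0 < c%:R :> R by rewrite ltr0n.
have t2c : (tau.*2 <= c)%N.
  rewrite -(ler_nat R) -muln2 natrM; move: tc2; rewrite ler_pdivlMr //.
have PF := @pi_form _ _ _ _ _ _ _ _ l0 d0 c0 xL0 xLH SS.
pose F j := ww xs xL xH tau j * @Pp R c j.
have sumE : forall m n, (n <= c.+1)%N ->
    \sum_(m <= j < n) pi j = pi 0%N * \sum_(m <= j < n) F j.
  move=> m n Hn; rewrite big_distrr; apply: eq_big_nat => j /andP[_ Hj].
  rewrite PF; first by rewrite /F /= mulrA.
  by rewrite -ltnS (leq_trans Hj Hn).
have pi0 : pi 0%N != 0.
  case: SS => _ [S1 _]; move: S1; rewrite sumE //.
  move=> S1; apply/negP => /eqP h; move: S1; rewrite h mul0r => /eqP; rewrite eq_sym oner_eq0; by [].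
have sLE : sL = \sum_(1 <= j < tau.+1) F j.
  by rewrite /sL sumE //; field.
have sHE : sH = \sum_(tau.+1 <= j < c.+1) F j.
  by rewrite /sH sumE //; field.
have xsL : xL < xs by rewrite /xs; lra.
have xsH : xs < xH by rewrite /xs; lra.
have xH0 : 0 < xH by lra.
set a := xs / xL. set b := xs / xH.
have a0 : 0 < a by rewrite divr_gt0.
have b0 : 0 < b by rewrite divr_gt0.
have ainv : a^-1 = xL / xs by rewrite invf_div.
have binv : b^-1 - 1 = 1 - xL / xs.
  rewrite /b; have -> : xH = 2 * xs - xL by rewrite /xs; lra.
  rewrite invf_div; field; by rewrite gt_eqF.
set D := 1 - xL / xs.
have D0 : 0 < D.
  by rewrite /D subr_gt0 ltr_pdivrMr // mul1r.
set A := a ^+ tau. set B := b ^+ tau.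
have A0 : 0 < A by rewrite exprn_gt0.
have B0 : 0 < B by rewrite exprn_gt0.
set G := \sum_(1 <= j < tau.+1) a ^+ j.
set H := \sum_(1 <= j < tau.+1) b ^+ j.
have GE : G = (A - 1) / D.
  by rewrite -(@geom1 R a tau (lt0r_neq0 a0)) ainv -/D mulfK // lt0r_neq0.
have HE : H = (1 - B) / D.
  by rewrite -(@geom2 R b tau (lt0r_neq0 b0)) binv -/D mulfK // lt0r_neq0.
split.
  rewrite sLE -GE big_distrr; apply: ler_sum_nat => j /andP[j1 jt] /=.
  rewrite /F /= ww_low // -/a mulrC; apply: ler_wpM2l; first by rewrite exprn_ge0 // ltW.
  have [_ [_ P2]] := @Pp_bounds R c j c0 (leq_trans (jt : (j <= tau)%N) tc).
  apply: le_trans P2; rewrite lerD2l lerN2 ler_pM2r ?invr_gt0 ?mulr_gt0 //.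
  have jt' : j%:R <= tau%:R :> R by rewrite ler_nat.
  have j0 : 0 <= j%:R :> R by rewrite ler0n.
  nra.
have sLle : sL <= G.
  rewrite sLE; apply: ler_sum_nat => j /andP[j1 jt] /=.
  rewrite /F /= ww_low // -/a.
  have [P0 [P1 _]] := @Pp_bounds R c j c0 (leq_trans (jt : (j <= tau)%N) tc).
  by rewrite ler_piMr // exprn_ge0 // ltW.
set t := 2 * tau%:R ^+ 2 / c%:R.
have t0 : 0 <= t by rewrite divr_ge0 ?mulr_ge0 ?ler0n ?sqr_ge0.
have sHge : (1 - t) * A * H <= sH.
  rewrite sHE (@big_cat_nat _ _ _ (tau.*2.+1)) /=; last 2 first.
  - by rewrite ltnS -addnn leq_addr.
  - by rewrite ltnS.
  have S2 : 0 <= \sum_(tau.*2.+1 <= j < c.+1) F j.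
    rewrite big_nat_cond; apply: sumr_ge0 => j /andP[/andP[_ jc] _].
    have [P0 _] := @Pp_bounds R c j c0 jc.
    apply: mulr_ge0 => //; exact: ww_ge0.
  suff S1 : (1 - t) * A * H <= \sum_(tau.+1 <= j < tau.*2.+1) F j by lra.
  rewrite -(add1n tau) big_addn -addnn -addSn addnK.
  rewrite /H big_distrr; apply: ler_sum_nat => i /andP[i1 it] /=.
  have itc : (i + tau <= c)%N.
    apply: leq_trans t2c; rewrite -addnn leq_add2r; exact: it.
  have [_ [_ P2]] := @Pp_bounds R c (i + tau) c0 itc.
  have q : 1 - t <= Pp c (i + tau).
    apply: le_trans P2; rewrite lerD2l lerN2.
    have E : t = (4 * tau%:R ^+ 2) / (2 * c%:R) by rewrite /t; field; rewrite gt_eqF.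
    rewrite E; apply: ler_wpM2r; first by rewrite invr_ge0 mulr_ge0 // ler0n.
    have it' : (i + tau)%:R <= 2 * tau%:R :> R.
      have h : (i + tau <= 2 * tau)%N by rewrite mul2n -addnn leq_add2r.
      by move: h; rewrite -(ler_nat R) natrM.
    have i0 : 0 <= (i + tau)%:R :> R by rewrite ler0n.
    nra.
  rewrite /F /= ww_high -/a -/b -/A.
  have X0 : 0 <= A * b ^+ i by rewrite mulr_ge0 // exprn_ge0 // ltW.
  nra.
have key : A / D * (t + B) - ((A - 1) / D - (1 - t) * A * ((1 - B) / D)) =
  (1 + t * A * B) / D by field; rewrite gt_eqF.
have : 0 <= (1 + t * A * B) / D.
  have : 0 <= t * A * B by apply: mulr_ge0; [apply: mulr_ge0 => //; exact: ltW | exact: ltW].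
  move=> h; apply: divr_ge0; [lra | exact: ltW].
rewrite -key -GE -HE; lra.
Qed.
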